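(* Let $\mathfrak g$ be a pre-Lie algebra and $r_1,r_2\in\mathrm{Sym}^2(\mathfrak g)$ two $\mathfrak s$-matrices. If $(\phi,\varphi)$ is a weak homomorphism from $r_2$ to $r_1$, then $(\phi,\varphi)$ is a weak homomorphism from the phase space $(\mathfrak g^c,\mathfrak g^{*c},\omega_p,r_2)$ to the phase space $(\mathfrak g^c,\mathfrak g^{*c},\omega_p,r_1)$; that is, $\varphi^*:(\mathfrak g^*,[\cdot,\cdot]_{r_2})\to(\mathfrak g^*,[\cdot,\cdot]_{r_1})$ is a Lie algebra homomorphism and $\phi+\varphi^*:(\mathfrak g\oplus\mathfrak g^*,[\cdot,\cdot]_{p,r_2})\to(\mathfrak g\oplus\mathfrak g^*,[\cdot,\cdot]_{p,r_1})$ is a Lie algebra homomorphism.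
   Context: A pre-Lie algebra is a finite-dimensional vector space $\mathfrak g$ over a field of characteristic $0$ with product $\cdot$ satisfying $(x\cdot y)\cdot z-x\cdot(y\cdot z)=(y\cdot x)\cdot z-y\cdot(x\cdot z)$; $\mathfrak g^c$ has bracket $[x,y]_{\mathfrak g}=x\cdot y-y\cdot x$. Define $\langle L^*_x\alpha,y\rangle=-\langle\alpha,x\cdot y\rangle$, $\langle R^*_x\alpha,y\rangle=-\langle\alpha,y\cdot x\rangle$, $\mathrm{ad}^*_x=L^*_x-R^*_x$. For $r\in\mathrm{Sym}^2(\mathfrak g)$, $\langle r^\sharp(\alpha),\beta\rangle=r(\alpha,\beta)$; for $r=\sum_ia_i\otimes b_i$, $[r,r]=-\sum a_i\cdot a_j\otimes b_i\otimes b_j+\sum a_i\otimes b_i\cdot a_j\otimes b_j+\sum a_i\otimes a_j\otimes[b_i,b_j]_{\mathfrak g}$; $r$ is an $\mathfrak s$-matrix if $[r,r]=0$. Set $\alpha\cdot_r\beta=\mathrm{ad}^*_{r^\sharp(\alpha)}\beta-R^*_{r^\sharp(\beta)}\alpha$, $[\alpha,\beta]_r=L^*_{r^\sharp(\alpha)}\beta-L^*_{r^\sharp(\beta)}\alpha$, and for $\alpha\in\mathfrak g^*$ define $L^*_\alpha:\mathfrak g\to\mathfrak g$ by $\langle L^*_\alpha x,\beta\rangle=-\langle x,\alpha\cdot_r\beta\rangle$. The phase space $(\mathfrak g^c,\mathfrak g^{*c},\omega_p,r)$ associated to $r$ is $\mathfrak g\oplus\mathfrak g^*$ with the Lie bracket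 $[x+\alpha,y+\beta]_{p,r}=[\alpha,\beta]_r+L^*_x\beta-L^*_y\alpha+L^*_\alpha y-L^*_\beta x+[x,y]_{\mathfrak g}$ and the form $\omega_p(x+\alpha,y+\beta)=\langle\alpha,y\rangle-\langle x,\beta\rangle$. A weak homomorphism from $\mathfrak s$-matrix $r_2$ to $\mathfrak s$-matrix $r_1$ is a pair $(\phi,\varphi)$ with $\phi:\mathfrak g^c\to\mathfrak g^c$ a Lie algebra homomorphism and $\varphi:\mathfrak g\to\mathfrak g$ linear, such that $(\varphi\otimes\mathrm{Id})r_1=(\mathrm{Id}\otimes\phi)r_2$ and $\varphi(\phi(x)\cdot y)=x\cdot\varphi(y)$ for all $x,y\in\mathfrak g$. *)

(* Defs.v *)
(* A finite-dimensional vector space g over a field F is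
   modelled as 'rV[F]_n with standard basis e i; its dual g^* is modelled as
   'rV[F]_n with the coordinate pairing <alpha, x> = sum_i alpha_i x_i. *)
From HB Require Import structures.
From mathcomp Require Import all_boot all_order all_algebra.
Set Implicit Arguments. Unset Strict Implicit. Unset Printing Implicit Defensive.
Import Order.TTheory GRing.Theory Num.Theory.
Local Open Scope ring_scope.

Section PreLie.
Variables (F : fieldType) (n : nat).
Local Notation V := 'rV[F]_n.

(* standard basis vector (of g, and also the dual basis of g^* ) *)
Definition e (i : 'I_n) : V := delta_mx 0 i.

Definition pair (alpha x : V) : F := \sum_(i < n) alpha 0 i * x 0 i.

Definition bilinear_op (mul : V -> V -> V) : Prop :=
  (forall (a : F) x y z, mul (a *: x + y) z = a *: mul x z + mul y z) /\
  (forall (a : F) x y z, mul x (a *: y + z) = a *: mul x y + mul x z).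

Definition preLie_axiom (mul : V -> V -> V) : Prop :=
  forall x y z, mul (mul x y) z - mul x (mul y z) = mul (mul y x) z - mul y (mul x z).

Definition preLie (mul : V -> V -> V) : Prop := bilinear_op mul /\ preLie_axiom mul.

Definition brk (mul : V -> V -> V) (x y : V) : V := mul x y - mul y x.

Definition Lst (mul : V -> V -> V) (x alpha : V) : V :=
  \row_j (- pair alpha (mul x (e j))).
Definition Rst (mul : V -> V -> V) (x alpha : V) : V :=
  \row_j (- pair alpha (mul (e j) x)).
Definition adst (mul : V -> V -> V) (x alpha : V) : V := Lst mul x alpha - Rst mul x alpha.

(* r in Sym^2(g) is encoded by its coefficient matrix: r = sum_{i,j} r i j e_i (x) e_j *)
Definition sym2 (r : 'M[F]_n) : Prop := r^T = r.

(* <r^#(alpha), beta> = r(alpha, beta) = sum_{i,j} r_ij alpha_i beta_j *)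
Definition rsharp (r : 'M[F]_n) (alpha : V) : V := alpha *m r.

(* coefficient (p,q,s) of [r,r] in g (x) g (x) g, computed from the
   decomposition r = sum_{i,j} r_ij e_i (x) e_j *)
Definition rr (mul : V -> V -> V) (r : 'M[F]_n) (p q s : 'I_n) : F :=
  - (\sum_(i < n) \sum_(j < n) \sum_(k < n) \sum_(l < n)
       r i j * r k l * (mul (e i) (e k)) 0 p * (j == q)%:R * (l == s)%:R)
  + (\sum_(i < n) \sum_(j < n) \sum_(k < n) \sum_(l < n)
       r i j * r k l * (i == p)%:R * (mul (e j) (e k)) 0 q * (l == s)%:R)
  + (\sum_(i < n) \sum_(j < n) \sum_(k < n) \sum_(l < n)
       r i j * r k l * (i == p)%:R * (k == q)%:R * (brk mul (e j) (e l)) 0 s).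

Definition s_matrix (mul : V -> V -> V) (r : 'M[F]_n) : Prop :=
  forall p q s, rr mul r p q s = 0.

Definition dotr (mul : V -> V -> V) (r : 'M[F]_n) (alpha beta : V) : V :=
  adst mul (rsharp r alpha) beta - Rst mul (rsharp r beta) alpha.

Definition brr (mul : V -> V -> V) (r : 'M[F]_n) (alpha beta : V) : V :=
  Lst mul (rsharp r alpha) beta - Lst mul (rsharp r beta) alpha.

Definition Lstd (mul : V -> V -> V) (r : 'M[F]_n) (alpha x : V) : V :=
  \row_j (- pair (dotr mul r alpha (e j)) x).

Definition brp (mul : V -> V -> V) (r : 'M[F]_n) (u v : V * V) : V * V :=
  let: (x, alpha) := u in let: (y, beta) := v in
  (Lstd mul r alpha y - Lstd mul r beta x + brk mul x y,
   brr mul r alpha beta + Lst mul x beta - Lst mul y alpha).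

Definition dualmap (f : V -> V) (alpha : V) : V := \row_j pair alpha (f (e j)).

(* coefficient matrix of (f (x) g) r *)
Definition tmap (f g : V -> V) (r : 'M[F]_n) : 'M[F]_n :=
  \matrix_(p, q) \sum_(i < n) \sum_(j < n) r i j * (f (e i)) 0 p * (g (e j)) 0 q.

Definition lie_hom (mul : V -> V -> V) (phi : {linear V -> V}) : Prop :=
  forall x y, phi (brk mul x y) = brk mul (phi x) (phi y).

Definition weak_hom (mul : V -> V -> V) (r2 r1 : 'M[F]_n)
    (phi varphi : {linear V -> V}) : Prop :=
  [/\ lie_hom mul phi,
      tmap varphi id r1 = tmap id phi r2 &
      forall x y, varphi (mul (phi x) y) = mul x (varphi y)].

End PreLie.

(* Main.v *)
Require Import Defs.
From HB Require Import structures.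
From mathcomp Require Import all_boot all_order all_algebra.
From mathcomp Require Import ring.
Import GRing.Theory.
Local Open Scope ring_scope.

Lemma pairDl {F : fieldType} {n : nat} (u v x : 'rV[F]_n) : pair (u + v) x = pair u x + pair v x.
Proof. rewrite /pair -big_split /=; apply: eq_bigr => i _; by rewrite mxE mulrDl. Qed.
Lemma pairZl {F : fieldType} {n : nat} (a : F) (u x : 'rV[F]_n) : pair (a *: u) x = a * pair u x.
Proof. rewrite /pair mulr_sumr; apply: eq_bigr => i _; by rewrite mxE mulrA. Qed.
Lemma pairNl {F : fieldType} {n : nat} (u x : 'rV[F]_n) : pair (- u) x = - pair u x.
Proof. by rewrite -scaleN1r pairZl mulN1r. Qed.
Lemma pairBl {F : fieldType} {n : nat} (u v x : 'rV[F]_n) : pair (u - v) x = pair u x - pair v x.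
Proof. by rewrite pairDl pairNl. Qed.
Lemma pair_sym {F : fieldType} {n : nat} (u x : 'rV[F]_n) : pair u x = pair x u.
Proof. rewrite /pair; apply: eq_bigr => i _; by rewrite mulrC. Qed.
Lemma pairDr {F : fieldType} {n : nat} (u v x : 'rV[F]_n) : pair x (u + v) = pair x u + pair x v.
Proof. by rewrite !(pair_sym x) pairDl. Qed.
Lemma pairZr {F : fieldType} {n : nat} (a : F) (u x : 'rV[F]_n) : pair x (a *: u) = a * pair x u.
Proof. by rewrite !(pair_sym x) pairZl. Qed.
Lemma pairBr {F : fieldType} {n : nat} (u v x : 'rV[F]_n) : pair x (u - v) = pair x u - pair x v.
Proof. by rewrite !(pair_sym x) pairBl. Qed.

Lemma pair_e {F : fieldType} {n : nat} (a : 'rV[F]_n) j : pair a (e F j) = a 0 j.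
Proof.
rewrite /pair (bigD1 j) //= big1 ?addr0; first by rewrite /e mxE !eqxx mulr1.
by move=> i /negbTE Hi; rewrite /e mxE Hi andbF mulr0.
Qed.

Lemma row_eq {F : fieldType} {n : nat} (u v : 'rV[F]_n) :
  (forall y, pair u y = pair v y) -> u = v.
Proof. move=> H; apply/rowP => j; have := H (e F j); by rewrite !pair_e. Qed.

Lemma lin_expand {F : fieldType} {n : nat} (g : 'rV[F]_n -> F)
  (Hg : forall a u v, g (a *: u + v) = a * g u + g v) b :
  g b = \sum_(j < n) b 0 j * g (e F j).
Proof.
have g0 : g 0 = 0.
  have := Hg 1 0 0; rewrite scaler0 addr0 mul1r => H.
  by apply: (@addrI _ (g 0)); rewrite addr0 -H.
rewrite {1}(row_sum_delta b).
apply: (big_rec2 (fun a c => g a = c)) => // i y1 y2 _ /= <-.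
by rewrite Hg.
Qed.

Lemma Lst_pair {F : fieldType} {n : nat} (mul : 'rV[F]_n -> 'rV[F]_n -> 'rV[F]_n)
  (Hb : bilinear_op mul) x b y : pair (Lst mul x b) y = - pair b (mul x y).
Proof.
rewrite pair_sym /pair; under eq_bigr do rewrite mxE.
have Hg : forall a u v, (fun y => - pair b (mul x y)) (a *: u + v)
   = a * (fun y => - pair b (mul x y)) u + (fun y => - pair b (mul x y)) v.
  by move=> a u v /=; rewrite Hb.2 pairDr pairZr; ring.
have /= -> := lin_expand (fun y => - pair b (mul x y)) Hg y; by [].
Qed.

Lemma Rst_pair {F : fieldType} {n : nat} (mul : 'rV[F]_n -> 'rV[F]_n -> 'rV[F]_n)
  (Hb : bilinear_op mul) x b y : pair (Rst mul x b) y = - pair b (mul y x).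
Proof.
rewrite pair_sym /pair; under eq_bigr do rewrite mxE.
have Hg : forall a u v, (fun y => - pair b (mul y x)) (a *: u + v)
   = a * (fun y => - pair b (mul y x)) u + (fun y => - pair b (mul y x)) v.
  by move=> a u v /=; rewrite Hb.1 pairDr pairZr; ring.
have /= -> := lin_expand (fun y => - pair b (mul y x)) Hg y; by [].
Qed.

Lemma dual_pair {F : fieldType} {n : nat} (f : {linear 'rV[F]_n -> 'rV[F]_n}) a y :
  pair (dualmap f a) y = pair a (f y).
Proof.
rewrite pair_sym {1}/pair; under eq_bigr do rewrite mxE.
have Hg : forall c u v, (fun y => pair a (f y)) (c *: u + v)
   = c * (fun y => pair a (f y)) u + (fun y => pair a (f y)) v.
  by move=> c u v /=; rewrite linearD linearZ pairDr pairZr.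
have /= -> := lin_expand (fun y => pair a (f y)) Hg y; by [].
Qed.

Lemma dotr_pair {F : fieldType} {n : nat} (mul : 'rV[F]_n -> 'rV[F]_n -> 'rV[F]_n)
  (Hb : bilinear_op mul) r a b z :
  pair (dotr mul r a b) z = - pair b (brk mul (rsharp r a) z) + pair a (mul z (rsharp r b)).
Proof.
rewrite /dotr /adst !pairBl !Lst_pair // !Rst_pair // /brk pairBr; ring.
Qed.

Lemma rsharpD {F : fieldType} {n : nat} (r : 'M[F]_n) a u v :
  rsharp r (a *: u + v) = a *: rsharp r u + rsharp r v.
Proof. by rewrite /rsharp mulmxDl scalemxAl. Qed.

Lemma Lstd_pair {F : fieldType} {n : nat} (mul : 'rV[F]_n -> 'rV[F]_n -> 'rV[F]_n)
  (Hb : bilinear_op mul) r a x b : pair (Lstd mul r a x) b = - pair (dotr mul r a b) x.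
Proof.
rewrite pair_sym {1}/pair; under eq_bigr do rewrite mxE.
have Hg : forall c u v, (fun b => - pair (dotr mul r a b) x) (c *: u + v)
   = c * (fun b => - pair (dotr mul r a b) x) u + (fun b => - pair (dotr mul r a b) x) v.
  move=> c u v /=; rewrite !dotr_pair // rsharpD Hb.2. by rewrite pairDl pairZl (pairDr _ _ a) (pairZr _ _ a); ring.
have /= -> := lin_expand (fun b => - pair (dotr mul r a b) x) Hg b; by [].
Qed.

Lemma dualmap_mx {F : fieldType} {n : nat} (f : {linear 'rV[F]_n -> 'rV[F]_n}) a :
  dualmap f a = a *m (lin1_mx f)^T.
Proof.
apply/rowP => j; rewrite !mxE /pair; apply: eq_bigr => i _; by rewrite !mxE.
Qed.

Lemma tmap_mx {F : fieldType} {n : nat} (f g : 'rV[F]_n -> 'rV[F]_n) r :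
  tmap f g r = (lin1_mx f)^T *m r *m lin1_mx g.
Proof.
apply/matrixP => p q; rewrite !mxE.
under [RHS]eq_bigr do rewrite !mxE big_distrl /=.
rewrite exchange_big /=; apply: eq_bigr => i _; apply: eq_bigr => j _.
by rewrite !mxE; ring.
Qed.

Lemma lin1_id {F : fieldType} {n : nat} : lin1_mx (@id 'rV[F]_n) = 1%:M.
Proof. by apply/matrixP => i j; rewrite !mxE eqxx eq_sym. Qed.

Theorem proposition5p6 (F : fieldType) (n : nat)
  (charF : [pchar F] =i pred0)
  (mul : 'rV[F]_n -> 'rV[F]_n -> 'rV[F]_n) (HpL : preLie mul)
  (r1 r2 : 'M[F]_n) (Hs1 : sym2 r1) (Hs2 : sym2 r2)
  (Hr1 : s_matrix mul r1) (Hr2 : s_matrix mul r2)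
  (phi varphi : {linear 'rV[F]_n -> 'rV[F]_n})
  (Hw : weak_hom mul r2 r1 phi varphi) :
  (forall alpha beta : 'rV[F]_n,
      dualmap varphi (brr mul r2 alpha beta)
      = brr mul r1 (dualmap varphi alpha) (dualmap varphi beta)) /\
  (forall u v : 'rV[F]_n * 'rV[F]_n,
      let hom := fun w : 'rV[F]_n * 'rV[F]_n => (phi w.1, dualmap varphi w.2) in
      hom (brp mul r2 u v) = brp mul r1 (hom u) (hom v)).
Proof.
case: HpL => Hb _; case: Hw => Hl Ht Hm.
rewrite !tmap_mx lin1_id trmx1 mulmx1 mul1mx in Ht.
have Ht' := congr1 trmx Ht; rewrite !trmx_mul trmxK /sym2 in Ht'.
rewrite Hs1 Hs2 in Ht'.
have K1 : forall a, rsharp r1 (dualmap varphi a) = phi (rsharp r2 a).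
  by move=> a; rewrite dualmap_mx /rsharp -mul_rV_lin1 -!mulmxA Ht.
have K2 : forall b, rsharp r2 (dualmap phi b) = varphi (rsharp r1 b).
  by move=> b; rewrite dualmap_mx /rsharp -mul_rV_lin1 -!mulmxA Ht'.
have P1 : forall alpha beta : 'rV[F]_n,
      dualmap varphi (brr mul r2 alpha beta)
      = brr mul r1 (dualmap varphi alpha) (dualmap varphi beta).
  move=> a b; apply: row_eq => y.
  rewrite dual_pair /brr !pairBl !Lst_pair // !dual_pair !K1 !Hm //.
split=> // -[x a] [y b] /=.
have KL : forall x b, dualmap varphi (Lst mul x b) = Lst mul (phi x) (dualmap varphi b).
  move=> x' b'; apply: row_eq => z.
  by rewrite dual_pair !Lst_pair // dual_pair Hm.
have DD : forall u v, dualmap varphi (u + v) = dualmap varphi u + dualmap varphi v.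
  by move=> u v; rewrite !dualmap_mx mulmxDl.
have DN : forall u, dualmap varphi (- u) = - dualmap varphi u.
  by move=> u; rewrite !dualmap_mx mulNmx.
have KS : forall a y, phi (Lstd mul r2 a y) = Lstd mul r1 (dualmap varphi a) (phi y).
  move=> a' y'; apply: row_eq => g.
  rewrite (pair_sym (phi _)) -dual_pair pair_sym !Lstd_pair // !dotr_pair //.
  by rewrite K1 K2 -Hl !dual_pair Hm.
congr (_, _).
  by rewrite linearD linearB Hl !KS.
by rewrite DD DN DD P1 !KL.
Qed.
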